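(* Define Knuth's up-arrow operations on positive integers by $a\uparrow^1 b=a^b$, $a\uparrow^k 1=a$ and $a\uparrow^{k}(b+1)=a\uparrow^{k-1}(a\uparrow^{k}b)$ for $k\ge2$, $b\ge1$. Let $g_1=3\uparrow^4 3$ and $g_{i}=3\uparrow^{g_{i-1}}3$ for $i\ge2$. Then the sequence $(g_i)_{i\ge1}$ converges in the ring $\mathbb{Z}_{10}$ of $10$-adic integers, the sequence $(3\uparrow\uparrow j)_{j\ge1}$ (where $3\uparrow\uparrow j=3\uparrow^2 j$) also converges in $\mathbb{Z}_{10}$, and the two limits coincide: $\lim_{i\to\infty}g_i=\lim_{j\to\infty}3\uparrow\uparrow j$ in $\mathbb{Z}_{10}$.
   Context: $\mathbb{Z}_{10}=\varprojlim_m\mathbb{Z}/10^m\mathbb{Z}$ is the ring of $10$-adic integers; a sequence of integers converges in $\mathbb{Z}_{10}$ iff for every $m$ its last $m$ decimal digits are eventually constant. Graham's number is $G=g_{64}$. *)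

(* Defs.v *)
From mathcomp Require Import all_boot.
Set Implicit Arguments. Unset Strict Implicit. Unset Printing Implicit Defensive.

(* up k a b = a ↑^(k+1) b  (for b >= 1):
   up 0 a b = a ^ b,  up (k+1) a 1 = a,  up (k+1) a (b+1) = up k a (up (k+1) a b). *)
Fixpoint up (k a b : nat) : nat :=
  match k with
  | 0 => a ^ b
  | k'.+1 => iter b.-1 (up k' a) a
  end.

Definition uparrow (k a b : nat) : nat := up k.-1 a b.

(* Graham's sequence: g 1 = 3 ↑^4 3, g (i+1) = 3 ↑^(g i) 3; g 0 is a dummy value. *)
Fixpoint g (i : nat) : nat :=
  match i with
  | 0 => 0
  | i'.+1 => match i' with
             | 0 => uparrow 4 3 3
             | _ => uparrow (g i') 3 3
             end
  end.

Definition tet3 (j : nat) : nat := uparrow 2 3 j.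

(* Convergence in Z_10: for every m the last m decimal digits are eventually constant. *)
Definition converges10 (u : nat -> nat) : Prop :=
  forall m : nat, exists N : nat, forall n : nat, N <= n -> u n = u N %[mod 10 ^ m].

(* Two convergent sequences have the same 10-adic limit iff for every m their
   eventual residues mod 10^m agree. *)
Definition same_limit10 (u v : nat -> nat) : Prop :=
  forall m : nat, exists N : nat, forall i j : nat, N <= i -> N <= j ->
    u i = v j %[mod 10 ^ m].

(* Main.v *)
Require Import Defs.
From mathcomp Require Import all_boot zify.

Lemma expmod d M x : 3 ^ d = 1 %[mod M] -> 3 ^ x = 3 ^ (x %% d) %[mod M].
Proof.
move=> H; rewrite {1}(divn_eq x d) expnD (mulnC (x %/ d) d) expnM.
rewrite -modnMml -modnXm H modnXm exp1n modnMml mul1n //.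
Qed.

Lemma expmod2 d M x y : 3 ^ d = 1 %[mod M] -> x = y %[mod d] -> 3 ^ x = 3 ^ y %[mod M].
Proof. by move=> H E; rewrite (expmod _ _ x H) (expmod _ _ y H) E. Qed.

Lemma binom1 t M n : exists s, (1 + t * M) ^ n = 1 + n * t * M + M * M * s.
Proof.
elim: n => [|n [s IH]]; first by exists 0; rewrite expn0 !mul0n !muln0.
exists (n * t * t + s * (1 + t * M)); rewrite expnS IH. nia.
Qed.

Lemma p20 : 3 ^ 20 = 1 %[mod 100].
Proof.
have -> : 3 ^ 20 = (3 ^ 5) ^ 4 by rewrite -expnM.
rewrite -modnXm.
have -> : 3 ^ 5 %% 100 = 43 by [].
have -> : 43 ^ 4 = (43 ^ 2) ^ 2 by rewrite -expnM.
rewrite -modnXm.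
have -> : 43 ^ 2 %% 100 = 49 by [].
by [].
Qed.
Lemma p100 : 3 ^ 100 = 1 %[mod 1000].
Proof.
have -> : 3 ^ 100 = (3 ^ 10) ^ 10 by rewrite -expnM.
rewrite -modnXm.
have -> : 3 ^ 10 %% 1000 = 49 by [].
have -> : 49 ^ 10 = (49 ^ 2) ^ 5 by rewrite -expnM.
rewrite -modnXm.
have -> : 49 ^ 2 %% 1000 = 401 by [].
have [s ->] := binom1 4 100 5.
have -> : 1 + 5 * 4 * 100 + 100 * 100 * s = (2 + 10 * s) * 1000 + 1 by nia.
by rewrite modnMDl.
Qed.

Lemma liftp k : 3 ^ (10 ^ k.+2) = 1 %[mod 10 ^ k.+3].
Proof.
elim: k => [|k IH]; first exact: p100.
have -> : 3 ^ 10 ^ k.+3 = (3 ^ 10 ^ k.+2) ^ 10 by rewrite -expnM -expnSr.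
have EM : 10 ^ k.+4 = 10 * 10 ^ k.+3 by rewrite expnS.
rewrite EM.
set M := 10 ^ k.+3 in IH EM *.
have M1 : 1 < M by rewrite /M (ltn_exp2l 0) .
move: IH; rewrite (modn_small M1) => IH.
have [s Hs] := binom1 (3 ^ 10 ^ k.+2 %/ M) M 10.
rewrite {1}(divn_eq (3 ^ 10 ^ k.+2) M) IH addnC Hs.
have -> : 1 + 10 * (3 ^ 10 ^ k.+2 %/ M) * M + M * M * s
   = (3 ^ 10 ^ k.+2 %/ M + 10 ^ k.+2 * s) * (10 * M) + 1.
  have : M = 10 * 10 ^ k.+2 by rewrite /M expnS.
  move=> ->; nia.
rewrite modnMDl modn_small //; nia.
Qed.

Lemma contr k x y : x = y %[mod 10 ^ k.+2] -> 3 ^ x = 3 ^ y %[mod 10 ^ k.+3].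
Proof. exact: expmod2 (liftp k). Qed.

Lemma tetS j : tet3 j.+2 = 3 ^ tet3 j.+1.
Proof. by []. Qed.

Lemma tet4 j : tet3 j.+1 = 3 %[mod 4].
Proof.
elim: j => [|j IH] //.
rewrite tetS; apply: (@expmod2 2 4 _ 1) => //.
by rewrite -(@modn_dvdm 4) // IH.
Qed.

Lemma tet20 j : tet3 j.+2 = 7 %[mod 20].
Proof.
rewrite tetS (@expmod2 4 20 _ 3) //; exact: tet4.
Qed.

Lemma tet100 j : tet3 j.+3 = 87 %[mod 100].
Proof. by rewrite tetS (expmod2 _ _ _ _ p20 (tet20 j)). Qed.

Lemma stepP n j : n.+3 <= j -> tet3 j.+1 = tet3 j %[mod 10 ^ n.+2].
Proof.
elim: n j => [|n IH] j hj.
  have [j' ->] : exists j', j = j'.+3 by exists (j - 3); move: hj; clear; lia.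
  by rewrite (tet100 j'.+1) (tet100 j').
have [l El] : exists l, j = l.+2 by exists (j - 2); move: hj; clear; lia.
rewrite El in hj *.
have H : tet3 l.+2 = tet3 l.+1 %[mod 10 ^ n.+2].
  apply: IH; move: hj; clear; lia.
by have := contr _ _ _ H; rewrite -!tetS.
Qed.

Lemma stabQ m j : m.+3 <= j -> tet3 j = tet3 m.+3 %[mod 10 ^ m].
Proof.
move=> hj; rewrite -(subnKC hj); elim: (j - m.+3) => [|d IH].
  by rewrite addn0.
have D : 10 ^ m %| 10 ^ m.+2 by apply: dvdn_exp2l; apply: leqW.
rewrite addnS -(modn_dvdm _ D) stepP; last by rewrite leq_addr.
by rewrite (modn_dvdm _ D).
Qed.
Lemma growG k x : x < up k 3 x.
Proof.
elim: k x => [|k IH] x; first by rewrite /= ltn_expl.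
have H : forall n, n + 3 <= iter n (up k 3) 3.
  elim=> [|n IHn] //=; apply: leq_ltn_trans (IH _); exact: IHn.
rewrite /=; apply: leq_trans (H _); case: x => //= x; rewrite addn3 !ltnS leqnSn //.
Qed.

Lemma heightH k b : 0 < b -> exists n, b <= n /\ up k.+1 3 b = tet3 n.
Proof.
elim: k b => [|k IH] b hb; first by exists b.
case: b hb => [|[|c]] // _; first by exists 1.
have E : up k.+2 3 c.+2 = up k.+1 3 (up k.+2 3 c.+1) by [].
have [n [hn En]] := IH (up k.+2 3 c.+1) (leq_ltn_trans (leq0n _) (growG _ _)).
exists n; split; last by rewrite E.
exact: leq_trans (growG _ _) hn.
Qed.

Lemma growL k : k + 3 <= up k 3 3.
Proof.
elim: k => [|k IH]; first by [].
have -> : up k.+1 3 3 = up k 3 (up k 3 3) by [].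
rewrite addSn; exact: leq_ltn_trans IH (growG _ _).
Qed.

Lemma tet_gt n : n < tet3 n.
Proof. exact: growG. Qed.

Lemma E1 : g 1 = up 3 3 3.
Proof. reflexivity. Qed.
Lemma E2 i : g i.+2 = up (g i.+1).-1 3 3.
Proof. reflexivity. Qed.
Lemma E3 k : up k.+2 3 3 = up k.+1 3 (up k.+1 3 3).
Proof. reflexivity. Qed.
Lemma h233 : exists n, 3 <= n /\ up 3 3 3 = tet3 n.
Proof. exact: (heightH 2 3 isT). Qed.
Lemma graham i : i.+3 <= g i.+1 /\ exists n, i.+1 <= n /\ g i.+1 = tet3 n.
Proof.
elim: i => [|i [hi [n [hn En]]]].
  have [n [hn En]] := h233.
  
  split. 2:{ exists n; split. exact: leq_trans hn. rewrite E1 En. reflexivity. }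
  
  rewrite E1 En.  exact: ltnW (leq_ltn_trans hn (tet_gt n)).

have [k Ek] : exists k, (g i.+1).-1 = k.+2.
  by exists (g i.+1 - 3); move: hi; clear; lia.

have [m [hm Em]] := heightH k (up k.+1 3 3) (leq_ltn_trans (leq0n _) (growG _ _)).
have hk := growL k.+1.

have Hm : i.+3 <= m.
  apply: leq_trans hm; apply: leq_trans hk; move: hi Ek; clear; lia.

split; last by exists m; split; [exact: ltnW | rewrite E2 Ek E3 Em].
rewrite E2 Ek E3 Em; exact: leq_ltn_trans Hm (tet_gt m).
Qed.
Lemma g_lim m i : m.+3 <= i -> g i = tet3 m.+3 %[mod 10 ^ m].
Proof.
case: i => [|i] hi; first by [].
have [_ [n [hn ->]]] := graham i.
apply: stabQ; exact: leq_trans hn.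
Qed.

Theorem mainTheorem5 : converges10 g /\ converges10 tet3 /\ same_limit10 g tet3.
Proof.
split; [|split].
- move=> m; exists m.+3 => n hn.
  by rewrite (g_lim m n hn) (g_lim m m.+3 (leqnn _)).
- move=> m; exists m.+3 => n hn.
  by rewrite (stabQ m n hn).
- move=> m; exists m.+3 => i j hi hj.
  by rewrite (g_lim m i hi) (stabQ m j hj).
Qed.
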